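(* Let $n\ge1$ be an integer and $p>2$. Let $w$ be the fundamental solution of the $p$-Laplace equation in $\mathbb{R}^n$, i.e. \[w(x)=-c_{n,p}\tfrac{p-1}{p-n}|x|^{\frac{p-n}{p-1}}\ \text{ if } p\neq n,\qquad w(x)=-c_{n,n}\ln|x|\ \text{ if } p=n,\] with a constant $c_{n,p}>0$, and let $V(x):=\sum_{i=1}^N a_i w(x-y_i)$ with $N\ge1$, $a_i>0$, $y_i\in\mathbb{R}^n$. Then for every concave function $K\in C^2(\mathbb{R}^n)$, \[\Delta_p\big(V(x)+K(x)\big)\le 0\] at every point $x\in\mathbb{R}^n\setminus\{y_1,\dots,y_N\}$ where $\nabla V(x)+\nabla K(x)\neq0$ (i.e. wherever the left-hand side is defined).
   Context: For a function $u$ that is $C^2$ near $x$ with $\nabla u(x)\neq0$, the $p$-Laplacian is $\Delta_p u=|\nabla u|^{p-2}\Big((p-2)\frac{\nabla u\,(\mathcal{H}u)\,\nabla u^T}{|\nabla u|^2}+\Delta u\Big)$, where $\mathcal{H}u$ is the Hessian matrix of $u$. *)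

(* Defs.v *)
From HB Require Import structures.
From mathcomp Require Import all_boot all_order all_algebra.
From mathcomp Require Import all_classical all_reals all_analysis.
Set Implicit Arguments. Unset Strict Implicit. Unset Printing Implicit Defensive.
Import Order.TTheory GRing.Theory Num.Theory.
Import numFieldNormedType.Exports.
Local Open Scope ring_scope.

Section PLap.
Variables (R : realType) (n : nat).
Notation V := 'rV[R]_n.

Definition ebasis (i : 'I_n) : V := delta_mx 0 i.

(* Euclidean norm on R^n (NOT the max norm of the matrix normed module) *)
Definition enorm (v : V) : R := Num.sqrt (\sum_(i < n) v 0 i ^+ 2).

Definition partial (f : V -> R) (i : 'I_n) (x : V) : R := derive f x (ebasis i).

Definition grad (f : V -> R) (x : V) : V := \row_i partial f i x.

Definition hess (f : V -> R) (x : V) : 'M[R]_n :=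
  \matrix_(i, j) partial (partial f j) i x.

Definition laplacian (f : V -> R) (x : V) : R := \tr (hess f x).

(* p-Laplacian at a point with non-vanishing gradient, by the stated formula *)
Definition plaplacian (p : R) (f : V -> R) (x : V) : R :=
  let g := grad f x in
  (enorm g) `^ (p - 2) *
  ((p - 2) * ((g *m hess f x *m g^T) 0 0) / (enorm g) ^+ 2 + laplacian f x).

Definition C2 (f : V -> R) : Prop :=
  continuous f /\
  (forall i x, derivable f x (ebasis i)) /\
  (forall i, continuous (partial f i)) /\
  (forall i j x, derivable (partial f j) x (ebasis i)) /\
  (forall i j, continuous (partial (partial f j) i)).

Definition concave (f : V -> R) : Prop :=
  forall (x y : V) (t : R), 0 <= t <= 1 ->
    t * f x + (1 - t) * f y <= f (t *: x + (1 - t) *: y).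

Definition fundsol (p c : R) (x : V) : R :=
  if p == n%:R then - c * ln (enorm x)
  else - c * ((p - 1) / (p - n%:R)) * (enorm x) `^ ((p - n%:R) / (p - 1)).

End PLap.

(* Main.v *)
Require Import Defs.
From HB Require Import structures.
From mathcomp Require Import all_boot all_order all_algebra.
From mathcomp Require Import all_classical all_reals all_analysis.
From mathcomp Require Import ring lra.
Import Order.TTheory GRing.Theory Num.Theory.
Import numFieldNormedType.Exports.
Local Open Scope ring_scope.

Module Helpers.
Set Implicit Arguments. Unset Strict Implicit. Unset Printing Implicit Defensive.
Local Open Scope classical_set_scope.

Section Basic.
Variables (R : realType) (n : nat).
Notation V := 'rV[R]_n.

Lemma derive_line (f : V -> R) x v :
  'D_v f x = 'D_1 (fun h : R => f (h *: v + x)) 0.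
Proof.
rewrite /derive /=.
have -> : (fun h : R => h^-1 *: (f (h *: v + x) - f x)) =
  (fun h : R => h^-1 *: (f ((h *: 1 + 0) *: v + x) - f (0 *: v + x))).
  by apply: funext => h; rewrite addr0 scale0r add0r [_ *: 1]mulr1.
by [].
Qed.

Lemma is_derive_lineP (f : V -> R) x v d :
  is_derive x v f d <-> is_derive (0:R) 1 (fun h : R => f (h *: v + x)) d.
Proof.
split=> -[H1 H2]; split.
- by move/derivable1P: H1.
- by rewrite -derive_line.
- by apply/derivable1P.
- by rewrite derive_line.
Qed.

Lemma is_derive_transl (g : R -> R) a d :
  is_derive (0:R) 1 (fun h => g (h + a)) d -> is_derive a 1 g d.
Proof.
move=> H.
have H2 : is_derive a 1 (shift (- a) : R -> R) 1 := is_derive_shift _ _ _.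
have H3 : is_derive ((shift (- a) : R -> R) a) 1 (fun h => g (h + a)) d by rewrite /= subrr.
have := is_derive1_comp H3 H2.
rewrite mulr1 => H4.
have -> : g = (fun h => g (h + a)) \o (shift (- a) : R -> R).
  by apply: funext => t /=; rewrite subrK.
exact: H4.
Qed.

Lemma is_derive_at_line (f : V -> R) x v s d :
  is_derive (s *: v + x) v f d -> is_derive s 1 (fun h : R => f (h *: v + x)) d.
Proof.
move/is_derive_lineP => H; apply: is_derive_transl.
by under eq_fun do rewrite scalerDl -addrA.
Qed.

Lemma is_derive_chain (g : V -> R) (phi : R -> R) x v a b :
  is_derive x v g b -> is_derive (g x) 1 phi a ->
  is_derive x v (fun z => phi (g z)) (a * b).
Proof.
move=> /is_derive_lineP Hg Hp; apply/is_derive_lineP.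
have Hp' : is_derive ((fun h : R => g (h *: v + x)) 0) 1 phi a.
  by rewrite /= scale0r add0r.
exact: (is_derive1_comp Hp' Hg).
Qed.

Lemma is_derive_affine (c d : R) :
  is_derive (0:R) 1 (fun h : R => h * c + d) c.
Proof.
have H : is_derive (0:R) 1 (c *: (id : R -> R) + cst d) (c *: 1 + 0).
  by apply: is_deriveD.
have -> : (fun h : R => h * c + d) = c *: (id : R -> R) + cst d.
  by apply: funext => h /=; rewrite mulrC.
by move: H; rewrite addr0 /GRing.scale /= mulr1.
Qed.

Lemma is_derive_coord x v (j : 'I_n) :
  is_derive x v (fun z : V => z 0 j) (v 0 j).
Proof.
apply/is_derive_lineP.
have -> : (fun h : R => (h *: v + x) 0 j) = (fun h => h * v 0 j + x 0 j).
  by apply: funext => h; rewrite !mxE.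
exact: is_derive_affine.
Qed.

Lemma is_derive_mulf (f g : V -> R) x v df dg :
  is_derive x v f df -> is_derive x v g dg ->
  is_derive x v (fun z => f z * g z) (f x * dg + g x * df).
Proof. move=> Hf Hg; exact: (is_deriveM Hf Hg). Qed.

Lemma is_derive_addf (f g : V -> R) x v df dg :
  is_derive x v f df -> is_derive x v g dg ->
  is_derive x v (fun z => f z + g z) (df + dg).
Proof. move=> Hf Hg; exact: (is_deriveD Hf Hg). Qed.

Lemma is_derive_cstf (a : R) x v : is_derive x v (fun _ : V => a) 0.
Proof. exact: is_derive_cst. Qed.

Lemma is_derive_sumf m (h : 'I_m -> V -> R) x v dh :
  (forall i, is_derive x v (h i) (dh i)) ->
  is_derive x v (fun z => \sum_(i < m) h i z) (\sum_(i < m) dh i).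
Proof.
move=> H; have := is_derive_sum H.
by rewrite fct_sumE.
Qed.

Lemma is_derive_invf (f : V -> R) x v df :
  f x != 0 -> is_derive x v f df ->
  is_derive x v (fun z => (f z)^-1) (- (f x) ^- 2 * df).
Proof.
move=> fx [H1 H2]; split; first exact: derivableV.
by rewrite deriveV // H2.
Qed.

Lemma is_derive_ext (f g : V -> R) x v d :
  f = g -> is_derive x v f d -> is_derive x v g d.
Proof. by move=> ->. Qed.

Lemma is_derive_coordB x v y (j : 'I_n) :
  is_derive x v (fun z : V => (z - y) 0 j) (v 0 j).
Proof.
apply/is_derive_lineP.
have -> : (fun h : R => (h *: v + x - y) 0 j) = (fun h => h * v 0 j + (x - y) 0 j).
  by apply: funext => h; rewrite !mxE addrA.
exact: is_derive_affine.
Qed.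

Definition sqn (y z : V) : R := \sum_(k < n) ((z - y) 0 k) ^+ 2.

Lemma is_derive_sqn x v y :
  is_derive x v (sqn y) (\sum_(k < n) 2 * ((x - y) 0 k * v 0 k)).
Proof.
rewrite /sqn.
apply: is_derive_sumf => k.
apply: (@is_derive_ext (fun z => (z - y) 0 k * (z - y) 0 k)).
  by apply: funext => z; rewrite expr2.
apply: is_derive_eq; first by apply: is_derive_mulf; apply: is_derive_coordB.
by rewrite -mulr2n mulr_natl.
Qed.

Definition dot (u w : V) : R := \sum_(k < n) u 0 k * w 0 k.

Lemma dot_ebasis u j : dot u (ebasis R j) = u 0 j.
Proof.
rewrite /dot (bigD1 j) //= big1 ?addr0.
  by rewrite /ebasis mxE !eqxx mulr1.
by move=> k kj; rewrite /ebasis mxE eqxx /= (negbTE kj) mulr0.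
Qed.

Lemma sqn_gt0 x y : x != y -> 0 < sqn y x.
Proof.
move=> xy.
have [k xk] : exists k, (x - y) 0 k != 0.
  case: (boolP [exists k, (x - y) 0 k != 0]) => [/existsP //|/existsPn H].
  exfalso; move/eqP: xy; apply; apply/eqP; rewrite -subr_eq0; apply/eqP/rowP => k.
  by move: (H k); rewrite negbK !mxE => /eqP.
rewrite /sqn (bigD1 k) //=; apply: ltr_wpDr.
  by apply: sumr_ge0 => i _; apply: sqr_ge0.
by rewrite exprn_even_gt0.
Qed.

Lemma enorm_gt0 (x y : V) : x != y -> 0 < enorm (x - y).
Proof. by move=> xy; rewrite /enorm sqrtr_gt0; apply: sqn_gt0. Qed.

Lemma is_derive_r (x v y : V) : x != y ->
  is_derive x v (fun z => enorm (z - y)) (dot (x - y) v / enorm (x - y)).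
Proof.
move=> xy.
have H := is_derive_chain (is_derive_sqn x v y) (is_derive1_sqrt (sqn_gt0 xy)).
have r0 : enorm (x - y) != 0 by rewrite gt_eqF // enorm_gt0.
suff -> : dot (x - y) v / enorm (x - y) = (2 * Num.sqrt (sqn y x))^-1 *
       \sum_(k < n) 2 * ((x - y) 0 k * v 0 k) by exact: H.
rewrite -mulr_sumr /dot.
change (Num.sqrt (sqn y x)) with (enorm (x - y)).
by field.
Qed.

Lemma is_derive_radial (phi : R -> R) dphi (x v y : V) : x != y ->
  is_derive (enorm (x - y)) 1 phi dphi ->
  is_derive x v (fun z => phi (enorm (z - y))) (dphi * (dot (x - y) v / enorm (x - y))).
Proof. by move=> xy H; apply: is_derive_chain => //; apply: is_derive_r. Qed.

Lemma near_neq (x y : V) : x != y -> \forall z \near x, z != y.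
Proof.
move=> xy.
have H : (fun z : V => z - y) @ x --> x - y.
  exact: (@cvgB _ _ _ (nbhs x) _ id (fun=> y) x y cvg_id (cvg_cst y)).
have xy0 : x - y != 0 by rewrite subr_eq0.
have := cvgr_neq0 (x - y) H xy0.
move=> /(_ _) HH; move: HH; apply: filter_app; near=> z => /=; rewrite subr_eq0.
Unshelve. all: by end_near.
Qed.

Section Radial.
Variables (phi phi1 phi2 : R -> R) (y : V).
Hypothesis Hphi : forall r : R, 0 < r -> is_derive r 1 phi (phi1 r).
Hypothesis Hphi1 : forall r : R, 0 < r -> is_derive r 1 phi1 (phi2 r).

Let f := fun z : V => phi (enorm (z - y)).

Lemma partial_radial (x : V) j : x != y ->
  partial f j x = phi1 (enorm (x - y)) * ((x - y) 0 j / enorm (x - y)).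
Proof.
move=> xy.
have := is_derive_radial (ebasis R j) xy (Hphi (enorm_gt0 xy)).
by rewrite dot_ebasis => H; rewrite /partial /f derive_val.
Qed.

Lemma derivable_radial (x v : V) : x != y -> derivable f x v.
Proof.
move=> xy; have := is_derive_radial v xy (Hphi (enorm_gt0 xy)).
by case.
Qed.

Definition Hent (x : V) (i j : 'I_n) : R :=
  let r := enorm (x - y) in let d := x - y in
  phi1 r * (d 0 j * (- r ^- 2 * (d 0 i / r)) + r^-1 * (ebasis R i) 0 j)
  + d 0 j * r^-1 * (phi2 r * (d 0 i / r)).

Lemma is_derive_partial_radial (x : V) i j : x != y ->
  is_derive x (ebasis R i) (partial f j) (Hent x i j).
Proof.
move=> xy.
pose Q := fun z : V => phi1 (enorm (z - y)) * ((z - y) 0 j * (enorm (z - y))^-1).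
have HQ : is_derive x (ebasis R i) Q (Hent x i j).
  have r0 : enorm (x - y) != 0 by rewrite gt_eqF // enorm_gt0.
  have H1 := is_derive_radial (ebasis R i) xy (Hphi1 (enorm_gt0 xy)).
  have H2 := is_derive_invf (f:=fun z => enorm (z - y)) r0 (is_derive_r (ebasis R i) xy).
  have H3 := is_derive_mulf (is_derive_coordB x (ebasis R i) y j) H2.
  have := is_derive_mulf H1 H3.
  rewrite /Hent dot_ebasis /Q.
  by rewrite /ebasis !mxE.
apply: near_eq_is_derive HQ.
have := near_neq xy; apply: filter_app; near=> z => zy.
by rewrite /Q partial_radial.
Unshelve. all: by end_near.
Qed.

Lemma Hent_form (x : V) i j : x != y ->
  Hent x i j =
  (phi2 (enorm (x - y)) / enorm (x - y) ^+ 2 - phi1 (enorm (x - y)) / enorm (x - y) ^+ 3)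
    * ((x - y) 0 i * (x - y) 0 j)
  + phi1 (enorm (x - y)) / enorm (x - y) * (ebasis R i) 0 j.
Proof.
move=> xy; have r0 : enorm (x - y) != 0 by rewrite gt_eqF // enorm_gt0.
rewrite /Hent; field; done.
Qed.
End Radial.

Lemma sum_ebasis (g : V) j : \sum_i g 0 i * (ebasis R i) 0 j = g 0 j.
Proof.
rewrite (bigD1 j) //= big1 ?addr0.
  by rewrite /ebasis mxE !eqxx mulr1.
by move=> k kj; rewrite /ebasis mxE eqxx /= eq_sym (negbTE kj) mulr0.
Qed.

Lemma qf_form (M : 'M[R]_n) (A B : R) (d g : V) :
  (forall i j, M i j = A * (d 0 i * d 0 j) + B * (ebasis R i) 0 j) ->
  (g *m M *m g^T) 0 0 = A * dot d g ^+ 2 + B * dot g g.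
Proof.
move=> HM; rewrite mxE.
have E : forall j, (g *m M) 0 j = A * d 0 j * dot d g + B * g 0 j.
  move=> j; rewrite mxE.
  rewrite (eq_bigr (fun i => A * d 0 j * (d 0 i * g 0 i) + B * (g 0 i * (ebasis R i) 0 j))).
    by rewrite big_split /= -!mulr_sumr sum_ebasis.
  by move=> i _; rewrite HM; ring.
rewrite (eq_bigr (fun j => A * dot d g * (d 0 j * g 0 j) + B * (g 0 j * g 0 j))).
  by rewrite big_split /= -!mulr_sumr /dot; ring.
by move=> j _; rewrite E mxE; ring.
Qed.

Lemma tr_form (M : 'M[R]_n) (A B : R) (d : V) :
  (forall i j, M i j = A * (d 0 i * d 0 j) + B * (ebasis R i) 0 j) ->
  \tr M = A * dot d d + B * n%:R.
Proof.
move=> HM; rewrite /mxtrace.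
rewrite (eq_bigr (fun i => A * (d 0 i * d 0 i) + B)).
  by rewrite big_split /= -mulr_sumr sumr_const card_ord mulr_natr.
by move=> i _; rewrite HM /ebasis mxE !eqxx mulr1.
Qed.
End Basic.

Lemma term_le0 (R : realType) (p nn phi1 phi2 r S G D : R) :
  2 < p -> 1 <= nn -> 0 < r -> 0 < G -> D = r ^+ 2 -> S <= G * D -> 0 <= S ->
  phi1 <= 0 -> (p - 1) * phi2 + (nn - 1) * (phi1 / r) = 0 ->
  (p - 2) * (((phi2 / r ^+ 2 - phi1 / r ^+ 3) * S + phi1 / r * G) / G)
   + ((phi2 / r ^+ 2 - phi1 / r ^+ 3) * D + phi1 / r * nn) <= 0.
Proof.
move=> p2 n1 r0 G0 -> SG S0 f1 harm.
have p1 : p - 1 != 0 by rewrite subr_eq0 gt_eqF //; lra.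
have r0' : r != 0 by rewrite gt_eqF.
have G0' : G != 0 by rewrite gt_eqF.
have e2 : phi2 = - (nn - 1) * (phi1 / r) / (p - 1).
  have e : phi2 * (p - 1) = - (nn - 1) * (phi1 / r) by lra.
  by rewrite -e mulfK.
set A := phi2 / r ^+ 2 - phi1 / r ^+ 3.
have eA : A = (- phi1 / r ^+ 3) * ((p + nn - 2) / (p - 1)).
  by rewrite /A e2; field; rewrite ?p1 ?r0' ?G0'.
have A0 : 0 <= A.
  rewrite eA; apply: mulr_ge0; first by apply: divr_ge0; [lra|apply: exprn_ge0; lra].
  by apply: divr_ge0; lra.
have t : S / G <= r ^+ 2 by rewrite ler_pdivrMr // mulrC.
have -> : (p - 2) * ((A * S + phi1 / r * G) / G) = (p - 2) * A * (S / G) + (p - 2) * (phi1 / r).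
  by field; rewrite ?p1 ?r0' ?G0'.
have H1 : (p - 2) * A * (S / G) <= (p - 2) * A * r ^+ 2.
  by apply: ler_wpM2l => //; apply: mulr_ge0 => //; lra.
have H2 : (p - 2) * A * r ^+ 2 + (p - 2) * (phi1 / r) + (A * r ^+ 2 + phi1 / r * nn) = 0.
  by rewrite /A e2; field; rewrite ?p1 ?r0' ?G0'.
lra.
Qed.

Section Concave1.
Variable R : realType.
Variable phi : R -> R.
Hypothesis cphi : forall a b t : R, 0 <= t <= 1 ->
  t * phi a + (1 - t) * phi b <= phi (t * a + (1 - t) * b).

Definition sl (a b : R) := (phi b - phi a) / (b - a).

Lemma slC a b : sl a b = sl b a.
Proof. by rewrite /sl -opprB -[b - a]opprB invrN mulrNN. Qed.

Lemma slope_ineq a b c : a < b < c -> sl a c <= sl a b /\ sl b c <= sl a c.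
Proof.
move=> /andP[ab bc].
have ca : 0 < c - a by lra.
have cb : 0 < c - b by lra.
have ba : 0 < b - a by lra.
pose t := (c - b) / (c - a).
have t01 : 0 <= t <= 1.
  apply/andP; split; first by apply: divr_ge0; lra.
  by rewrite ler_pdivrMr // mul1r; lra.
have := cphi a c t01.
have -> : t * a + (1 - t) * c = b.
  rewrite /t; field; by rewrite gt_eqF.
have -> : 1 - t = (b - a) / (c - a).
  rewrite /t; field; by rewrite gt_eqF.
rewrite /t /sl => H.
have H' : 0 <= (c - a) * phi b - (c - b) * phi a - (b - a) * phi c.
  have E : (c - b) * phi a + (b - a) * phi c =
     ((c - b) / (c - a) * phi a + (b - a) / (c - a) * phi c) * (c - a).
    by field; rewrite gt_eqF.
  have H0 : ((c - b) / (c - a) * phi a + (b - a) / (c - a) * phi c) * (c - a)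
      <= phi b * (c - a) by rewrite ler_pM2r.
  rewrite -E in H0; lra.
set N := (c - a) * phi b - (c - b) * phi a - (b - a) * phi c.
split.
  rewrite -subr_ge0.
  have -> : (phi b - phi a) / (b - a) - (phi c - phi a) / (c - a) = N / ((b - a) * (c - a)).
    by rewrite /N; field; rewrite !gt_eqF.
  by apply: divr_ge0 => //; apply: mulr_ge0; lra.
rewrite -subr_ge0.
have -> : (phi c - phi a) / (c - a) - (phi c - phi b) / (c - b) = N / ((c - a) * (c - b)).
  by rewrite /N; field; rewrite !gt_eqF.
by apply: divr_ge0 => //; apply: mulr_ge0; lra.
Qed.

Hypothesis psi : R -> R.
Hypothesis dphi : forall t : R, is_derive t 1 phi (psi t).

Lemma quot_sl s : (fun h : R => h^-1 *: ((phi \o shift s) (h *: 1) - phi s)) =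
  (fun h => sl s (h + s)).
Proof.
apply: funext => h /=; rewrite /sl addrK.
by rewrite [h *: 1]mulr1 mulrC.
Qed.

Lemma psi_lim s : psi s = lim ((fun h => sl s (h + s)) @ 0^').
Proof. by have [_ <-] := dphi s; rewrite /derive quot_sl. Qed.

Lemma psi_cvg s : cvg ((fun h => sl s (h + s)) @ 0^').
Proof. by have [H _] := dphi s; move: H; rewrite /derivable quot_sl. Qed.

Lemma psi_noninc s t : s < t -> psi t <= psi s.
Proof.
move=> st.
have ts : 0 < t - s by lra.
apply: (@le_trans _ _ (sl s t)).
  rewrite psi_lim; apply: limr_le; first exact: psi_cvg.
  near=> h.
  have h0 : h != 0 by near: h; exact: nbhs_dnbhs_neq.
  have hts : `|h| < t - s by near: h; apply: dnbhs0_lt.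
  move: h0; rewrite neq_lt => /orP[hn|hp].
  - move: hts; rewrite ltr0_norm // => hts.
    have [] // := @slope_ineq s (h + t) t.
      by apply/andP; split; lra.
    by move=> _; rewrite [sl (h + t) t]slC.
  - have [] // := @slope_ineq s t (h + t).
      by apply/andP; split; lra.
    move=> H1 H2; exact: le_trans H2 H1.
rewrite psi_lim; apply: limr_ge; first exact: psi_cvg.
near=> h.
have h0 : h != 0 by near: h; exact: nbhs_dnbhs_neq.
have hts : `|h| < t - s by near: h; apply: dnbhs0_lt.
move: h0; rewrite neq_lt => /orP[hn|hp].
- have [] // := @slope_ineq (h + s) s t.
    by apply/andP; split; lra.
  move=> H1 H2; rewrite [sl s (h + s)]slC; exact: le_trans H2 H1.
- move: hts; rewrite gtr0_norm // => hts.
  have [] // := @slope_ineq s (h + s) t.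
  by apply/andP; split; lra.
Unshelve. all: by end_near.
Qed.

Lemma concave_d2 (L : R) : is_derive (0:R) 1 psi L -> L <= 0.
Proof.
move=> [H1 <-].
rewrite /derive; apply: limr_le => //.
near=> h.
have h0 : h != 0 by near: h; exact: nbhs_dnbhs_neq.
rewrite /= [h *: 1]mulr1 addr0 /GRing.scale /=.
move: h0; rewrite neq_lt => /orP[hn|hp].
- rewrite nmulr_rle0 ?invr_lt0 // subr_ge0; apply: psi_noninc; lra.
- rewrite pmulr_rle0 ?invr_gt0 // subr_le0; apply: psi_noninc; lra.
Unshelve. all: by end_near.
Qed.
End Concave1.

Section CR.
Variables (R : realType) (n : nat).
Notation V := 'rV[R]_n.

Lemma is_derive_scale_dir (f : V -> R) z e c d :
  is_derive z e f d -> is_derive z (c *: e) f (c * d).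
Proof.
move/is_derive_lineP => H; apply/is_derive_lineP.
have Hm : is_derive (0:R) 1 (fun t : R => t * c + 0) c := is_derive_affine c 0.
have H' : is_derive ((fun t : R => t * c + 0) 0) 1 (fun h : R => f (h *: e + z)) d.
  by rewrite mul0r addr0.
have := is_derive1_comp (f:=fun h : R => f (h *: e + z)) (g:=fun t : R => t * c + 0) H' Hm.
have -> : (fun h : R => f (h *: e + z)) \o (fun t : R => t * c + 0) =
          (fun h : R => f (h *: (c *: e) + z)).
  by apply: funext => t /=; rewrite addr0 scalerA.
by rewrite mulrC.
Qed.

Definition wv (v : V) (k : nat) : V := \row_i (if (i < k)%N then v 0 i else 0).

Lemma wv0 v : wv v 0 = 0.
Proof. by apply/rowP => i; rewrite !mxE. Qed.

Lemma wvn v : wv v n = v.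
Proof. by apply/rowP => i; rewrite !mxE ltn_ord. Qed.

Lemma wvS v (k : 'I_n) : wv v k.+1 = wv v k + v 0 k *: ebasis R k.
Proof.
apply/rowP => i; rewrite !mxE ltnS leq_eqVlt eqxx /=.
case: (eqVneq i k) => [->|ik] /=.
  by rewrite ltnn eqxx mulr1 add0r.
have -> : (nat_of_ord i == nat_of_ord k) = false by apply/negbTE.
by rewrite /= mulr0 addr0.
Qed.

Variable f : V -> R.
Hypothesis Hd : forall i z, derivable f z (ebasis R i).
Hypothesis Hc : forall i, continuous (partial f i).

Lemma MVT_step (z : V) (c : R) k :
  exists2 s : R, s \in `[0, 1]%R &
    f (z + c *: ebasis R k) - f z = c * partial f k (s *: (c *: ebasis R k) + z).
Proof.
pose w := c *: ebasis R k.
pose g := fun s : R => f (s *: w + z).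
have Dg : forall s : R, is_derive s 1 g (c * partial f k (s *: w + z)).
  move=> s; apply: is_derive_at_line.
  rewrite /partial; apply: is_derive_scale_dir; exact: derivableP.
have D1 : forall s : R, s \in `]0, 1[%R -> is_derive s 1 g (c * partial f k (s *: w + z)).
  by move=> s _; exact: Dg.
have C1 : {within `[0, 1], continuous g}.
  apply: continuous_subspaceT => s.
  have [H _] := Dg s.
  exact/differentiable_continuous/derivable1_diffP.
have [s s01 E] := MVT_segment ler01 D1 C1.
exists s; first done.
by move: E; rewrite /g scale1r scale0r add0r subr0 mulr1 [w + z]addrC.
Qed.


Lemma chain_partials (x v : V) :
  is_derive x v f (\sum_(i < n) v 0 i * partial f i x).
Proof.
set L := \sum_(i < n) v 0 i * partial f i x.
suff Hcv : (fun h : R => h^-1 *: ((f \o shift x) (h *: v) - f x)) @ 0^' --> L.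
  have Hder : derivable f x v by apply/cvg_ex; exists L.
  by split => //; exact: cvg_lim Hcv.
apply/cvgrPdist_lt => e e0.
set SV := \sum_(k < n) `|v 0 k|.
have SV0 : 0 <= SV by apply: sumr_ge0 => k _; exact: normr_ge0.
set e' := e / (SV + 1).
have e'0 : 0 < e' by apply: divr_gt0 => //; lra.
have Hn : \forall z \near x, forall k, `|partial f k x - partial f k z| < e'.
  have := (@filter_forall _ _ (fun k => [set z | `|partial f k x - partial f k z| < e']) (nbhs x) _).
  apply => k.
  by have /cvgrPdist_lt := @Hc k x; apply.
have [δ δ0 Hδ] := (nbhs_ballP _ _).1 Hn.
set M := \sum_(k < n) (`|v 0 k *: ebasis R k| + `|wv v k|).
have M0 : 0 <= M by apply: sumr_ge0 => k _; apply: addr_ge0.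
near=> h.
have h0 : h != 0 by near: h; exact: nbhs_dnbhs_neq.
have hM : `|h| < δ / (M + 1).
  by near: h; apply: dnbhs0_lt; apply: divr_gt0 => //; lra.
have tel : f (h *: v + x) - f x =
    \sum_(k < n) (f (x + h *: wv v k.+1) - f (x + h *: wv v k)).
  rewrite -(big_mkord xpredT (fun k => f (x + h *: wv v k.+1) - f (x + h *: wv v k))).
  by rewrite telescope_sumr // wvn wv0 scaler0 addr0 [x + _]addrC.
have sc : forall a b : R, a *: b = a * b by [].
rewrite /= tel sc mulr_sumr /L -sumrB.
apply: le_lt_trans (ler_norm_sum _ _ _) _.
apply: (@le_lt_trans _ _ (\sum_(k < n) `|v 0 k| * e')).
  apply: ler_sum => k _.
  rewrite wvS scalerDr addrA scalerA.
  have [s s01 E] := MVT_step (x + h *: wv v k) (h * v 0 k) k.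
  rewrite E mulrA mulrA mulVf // mul1r -mulrBr normrM ler_wpM2l //.
  apply: ltW; apply: Hδ.
  rewrite -ball_normE /ball_ /=.
  have -> : x - (s *: ((h * v 0 k) *: ebasis R k) + (x + h *: wv v k)) =
      - (h *: (s *: (v 0 k *: ebasis R k) + wv v k)).
    by apply/rowP => i; rewrite !mxE; ring.
  rewrite normrN normrZ.
  have HB : `|s *: (v 0 k *: ebasis R k) + wv v k| <= M.
    apply: le_trans (ler_normD _ _) _.
    rewrite normrZ.
    have s1 : `|s| <= 1.
      by move: s01; rewrite in_itv /= => /andP[s0 s1]; rewrite ger0_norm.
    apply: (@le_trans _ _ (`|v 0 k *: ebasis R k| + `|wv v k|)).
      by rewrite lerD2r; apply: ler_piMl.
    rewrite /M (bigD1 k) //= lerDl.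
    by apply: sumr_ge0 => i _; apply: addr_ge0.
  apply: (@le_lt_trans _ _ (`|h| * M)); first by apply: ler_wpM2l.
  have hM' : `|h| * (M + 1) < δ by rewrite -ltr_pdivlMr //; lra.
  apply: le_lt_trans hM'; apply: ler_wpM2l => //; lra.
rewrite -mulr_suml -/SV /e'.
have -> : SV * (e / (SV + 1)) = e * (SV / (SV + 1)) by rewrite mulrCA.
rewrite -[ltRHS]mulr1 ltr_pM2l // ltr_pdivrMr; lra.
Unshelve. all: by end_near.
Qed.
End CR.

Section Gen.
Variables (R : realType) (U : normedModType R).

Lemma is_derive_cmulg (f : U -> R) x v d (k : R) :
  is_derive x v f d -> is_derive x v (fun z => k * f z) (k * d).
Proof.
move=> H; have := is_deriveM (is_derive_cst k x v) H.
by rewrite /GRing.scale /= mulr0 addr0.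
Qed.

Lemma is_derive_sumg m (h : 'I_m -> U -> R) x v dh :
  (forall i, is_derive x v (h i) (dh i)) ->
  is_derive x v (fun z => \sum_(i < m) h i z) (\sum_(i < m) dh i).
Proof. by move=> H; have := is_derive_sum H; rewrite fct_sumE. Qed.
End Gen.

Section KPart.
Variables (R : realType) (n : nat).
Notation V := 'rV[R]_n.

Lemma sum_ebasis_l (k : 'I_n) (a : 'I_n -> R) :
  \sum_i (ebasis R k) 0 i * a i = a k.
Proof.
rewrite (bigD1 k) //= big1 ?addr0.
  by rewrite /ebasis mxE !eqxx mul1r.
by move=> i ik; rewrite /ebasis mxE eqxx /= (negbTE ik) mul0r.
Qed.

Variable K : V -> R.
Hypothesis C2K : C2 K.
Hypothesis cK : concave K.

Lemma K_nsd (x v : V) :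
  \sum_(j < n) v 0 j * \sum_(i < n) v 0 i * hess K x i j <= 0.
Proof.
have [_ [Hd [Hc [Hd2 Hc2]]]] := C2K.
pose phi := fun t : R => K (t *: v + x).
pose psi := fun t : R => \sum_(j < n) v 0 j * partial K j (t *: v + x).
have cphi : forall a b t : R, 0 <= t <= 1 ->
    t * phi a + (1 - t) * phi b <= phi (t * a + (1 - t) * b).
  move=> a b t t01; rewrite /phi.
  have -> : (t * a + (1 - t) * b) *: v + x = t *: (a *: v + x) + (1 - t) *: (b *: v + x).
    by apply/rowP => i; rewrite !mxE; ring.
  exact: cK.
have dphi : forall t : R, is_derive t 1 phi (psi t).
  move=> t; apply: is_derive_at_line.
  exact: chain_partials.
have dpsi : is_derive (0:R) 1 psi
    (\sum_(j < n) v 0 j * \sum_(i < n) v 0 i * hess K x i j).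
  apply: is_derive_sumg => j; apply: is_derive_cmulg.
  have H := @chain_partials R n (partial K j) (fun i z => Hd2 i j z) (fun i => Hc2 i j) x v.
  move/is_derive_lineP: H.
  have -> : \sum_(i < n) v 0 i * hess K x i j = \sum_(i < n) v 0 i * partial (partial K j) i x.
    by apply: eq_bigr => i _; rewrite /hess mxE.
  done.
have := concave_d2 cphi dphi dpsi. done.
Qed.

Lemma K_qf (x g : V) : (g *m hess K x *m g^T) 0 0 <= 0.
Proof.
rewrite mxE.
have -> : \sum_j (g *m hess K x) 0 j * g^T j 0 =
    \sum_(j < n) g 0 j * \sum_(i < n) g 0 i * hess K x i j.
  by apply: eq_bigr => j _; rewrite !mxE mulrC.
exact: K_nsd.
Qed.

Lemma K_tr (x : V) : \tr (hess K x) <= 0.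
Proof.
rewrite /mxtrace; apply: sumr_le0 => k _.
have := K_nsd x (ebasis R k).
rewrite sum_ebasis_l sum_ebasis_l.
done.
Qed.
End KPart.

Section Main.
Variables (R : realType) (n : nat).
Notation V := 'rV[R]_n.

Lemma CS (d g : V) : 0 < dot d d -> dot d g ^+ 2 <= dot g g * dot d d.
Proof.
move=> D0.
set D := dot d d; set S := dot d g; set G := dot g g.
have H : 0 <= \sum_(k < n) (D * g 0 k - S * d 0 k) ^+ 2.
  by apply: sumr_ge0 => k _; apply: sqr_ge0.
have E : \sum_(k < n) (D * g 0 k - S * d 0 k) ^+ 2 =
    D ^+ 2 * G - 2 * D * S * S + S ^+ 2 * D.
  rewrite (eq_bigr (fun k => D ^+ 2 * (g 0 k * g 0 k) - (2 * D * S) * (d 0 k * g 0 k)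
                + S ^+ 2 * (d 0 k * d 0 k))); last by move=> k _; ring.
  by rewrite big_split sumrB /= -!mulr_sumr.
rewrite E in H.
have H2 : 0 <= D * (G * D - S ^+ 2) by move: H; congr (_ <= _); ring.
by move: H2; rewrite pmulr_rge0 // subr_ge0.
Qed.

Variables (p : R) (N : nat) (a : 'I_N -> R) (y : 'I_N -> V) (K : V -> R).
Hypothesis n1 : (1 <= n)%N.
Hypothesis p2 : 2 < p.
Hypothesis apos : forall i, 0 < a i.
Hypothesis C2K : C2 K.
Hypothesis cK : concave K.
Variables phi phi1 phi2 : R -> R.
Hypothesis D1 : forall r : R, 0 < r -> is_derive r 1 phi (phi1 r).
Hypothesis D2 : forall r : R, 0 < r -> is_derive r 1 phi1 (phi2 r).
Hypothesis Neg : forall r : R, 0 < r -> phi1 r <= 0.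
Hypothesis Harm : forall r : R, 0 < r -> (p - 1) * phi2 r + (n%:R - 1) * (phi1 r / r) = 0.

Let F := fun z : V => \sum_(l < N) a l * phi (enorm (z - y l)) + K z.

Lemma near_all (x : V) : (forall l, x != y l) -> \forall z \near x, forall l, z != y l.
Proof.
move=> xy.
have := (@filter_forall _ _ (fun l => [set z | z != y l]) (nbhs x) _).
apply => l; exact: near_neq.
Qed.

Lemma partial_F (z : V) j : (forall l, z != y l) ->
  partial F j z = \sum_(l < N) a l * partial (fun w => phi (enorm (w - y l))) j z + partial K j z.
Proof.
move=> zy.
have [_ [Hd _]] := C2K.
have H : is_derive z (ebasis R j) F
   (\sum_(l < N) a l * partial (fun w => phi (enorm (w - y l))) j z + partial K j z).
  apply: is_derive_addf; last exact: derivableP.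
  apply: is_derive_sumg => l; apply: is_derive_cmulg.
  exact/derivableP/(derivable_radial D1).
by rewrite /partial derive_val.
Qed.

Lemma hess_F (x : V) i j : (forall l, x != y l) ->
  hess F x i j = \sum_(l < N) a l * Hent phi1 phi2 (y l) x i j + hess K x i j.
Proof.
move=> xy.
have [_ [_ [_ [Hd2 _]]]] := C2K.
rewrite /hess !mxE.
pose P := fun z => \sum_(l < N) a l * partial (fun w => phi (enorm (w - y l))) j z + partial K j z.
have HP : is_derive x (ebasis R i) P
   (\sum_(l < N) a l * Hent phi1 phi2 (y l) x i j + partial (partial K j) i x).
  apply: is_derive_addf; last exact: derivableP.
  apply: is_derive_sumg => l; apply: is_derive_cmulg.
  exact: is_derive_partial_radial.
have HF : is_derive x (ebasis R i) (partial F j)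
   (\sum_(l < N) a l * Hent phi1 phi2 (y l) x i j + partial (partial K j) i x).
  apply: near_eq_is_derive HP.
  have := near_all xy; apply: filter_app; near=> z => zy.
  by rewrite /P partial_F.
by rewrite /partial derive_val.
Unshelve. all: by end_near.
Qed.


Lemma le0D (u w : R) : u <= 0 -> w <= 0 -> u + w <= 0.
Proof. by move=> ? ?; lra. Qed.

Lemma dot_sq (u : V) : dot u u = enorm u ^+ 2.
Proof.
rewrite /enorm sqr_sqrtr; last by apply: sumr_ge0 => k _; apply: sqr_ge0.
by apply: eq_bigr => k _; rewrite expr2.
Qed.

Lemma main_general (x : V) : (forall l, x != y l) -> grad F x != 0 ->
  plaplacian p F x <= 0.
Proof.
move=> xy g0.
rewrite /plaplacian.
set g := grad F x.
pose Ml := fun l => \matrix_(i, j) Hent phi1 phi2 (y l) x i j.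
have HE : hess F x = \sum_(l < N) a l *: Ml l + hess K x.
  apply/matrixP => i j; rewrite hess_F // !mxE summxE; congr (_ + _).
  by apply: eq_bigr => l _; rewrite !mxE.
have addE : forall A B : 'M[R]_1, (A + B) 0 0 = A 0 0 + B 0 0 by move=> A B; rewrite mxE.
have sclE : forall (c : R) (A : 'M[R]_1), (c *: A) 0 0 = c * A 0 0 by move=> c A; rewrite mxE.
have qfE : (g *m hess F x *m g^T) 0 0 =
    \sum_(l < N) a l * (g *m Ml l *m g^T) 0 0 + (g *m hess K x *m g^T) 0 0.
  rewrite HE mulmxDr mulmxDl addE mulmx_sumr mulmx_suml summxE.
  congr (_ + _); apply: eq_bigr => l _.
  by rewrite -scalemxAr -scalemxAl sclE.
have trE : \tr (hess F x) = \sum_(l < N) a l * \tr (Ml l) + \tr (hess K x).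
  rewrite HE mxtraceD raddf_sum; congr (_ + _); apply: eq_bigr => l _.
  by rewrite /mxtrace mulr_sumr; apply: eq_bigr => i _; rewrite mxE.
have G0 : 0 < dot g g.
  have := @sqn_gt0 R n g 0 g0.
  rewrite /sqn /dot => H; apply: (lt_le_trans H); rewrite le_eqVlt; apply/orP; left.
  by apply/eqP; apply: eq_bigr => k _; rewrite subr0 expr2.
rewrite /laplacian -(dot_sq g) qfE trE.
apply: mulr_ge0_le0; first exact: powR_ge0.
have -> : (p - 2) * (\sum_(l < N) a l * (g *m Ml l *m g^T) 0 0 + (g *m hess K x *m g^T) 0 0) / dot g g
   + (\sum_(l < N) a l * \tr (Ml l) + \tr (hess K x)) =
   \sum_(l < N) a l * ((p - 2) * ((g *m Ml l *m g^T) 0 0 / dot g g) + \tr (Ml l))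
   + ((p - 2) * ((g *m hess K x *m g^T) 0 0 / dot g g) + \tr (hess K x)).
  rewrite [in RHS](eq_bigr (fun l => a l * ((p - 2) * ((g *m Ml l *m g^T) 0 0 / dot g g)) + a l * \tr (Ml l))); last by move=> l _; ring.
  rewrite big_split /= mulrDr mulrDl mulr_sumr mulr_suml.
  have -> : \sum_(l < N) (p - 2) * (a l * (g *m Ml l *m g^T) 0 0) / dot g g =
      \sum_(l < N) a l * ((p - 2) * ((g *m Ml l *m g^T) 0 0 / dot g g)).
    by apply: eq_bigr => l _; ring.
  ring.
apply: le0D.
  apply: sumr_le0 => l _; apply: mulr_ge0_le0; first exact: ltW.
  have xyl := xy l.
  set r := enorm (x - y l).
  have r0 : 0 < r by apply: enorm_gt0.
  have HM : forall i j, Ml l i j = (phi2 r / r ^+ 2 - phi1 r / r ^+ 3) * ((x - y l) 0 i * (x - y l) 0 j)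
      + phi1 r / r * (ebasis R i) 0 j.
    by move=> i j; rewrite mxE Hent_form.
  rewrite (qf_form g HM) (tr_form HM).
  have Dr : dot (x - y l) (x - y l) = r ^+ 2 by rewrite dot_sq.
  apply: (@term_le0 R p n%:R (phi1 r) (phi2 r) r _ (dot g g) _ p2 _ r0 G0 Dr).
  - by rewrite ler1n.
  - by apply: CS; rewrite Dr exprn_gt0.
  - exact: sqr_ge0.
  - exact: Neg.
  - exact: Harm.
apply: le0D; last exact: K_tr.
apply: mulr_ge0_le0; first by rewrite subr_ge0 ltW.
apply: mulr_le0_ge0; first exact: K_qf.
by rewrite invr_ge0 ltW.
Qed.
End Main.

Lemma is_derive_val (R : realType) (f : R -> R) (x d d' : R) :
  d = d' -> is_derive x 1 f d -> is_derive x 1 f d'.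
Proof. by move=> ->. Qed.


End Helpers.
Import Helpers.

Theorem lemma4p1 (R : realType) (n : nat) (p c : R) (N : nat)
    (a : 'I_N -> R) (y : 'I_N -> 'rV[R]_n) (K : 'rV[R]_n -> R) :
  (1 <= n)%N -> 2 < p -> 0 < c -> (1 <= N)%N ->
  (forall i, 0 < a i) ->
  C2 K -> concave K ->
  let V := fun x : 'rV[R]_n => \sum_(i < N) a i * fundsol p c (x - y i) in
  forall x : 'rV[R]_n, (forall i, x != y i) ->
    grad (fun z => V z + K z) x != 0 ->
    plaplacian p (fun z => V z + K z) x <= 0.
Proof.
move=> n1 p2 c0 N1 apos C2K cK V x xy.
have p1 : p - 1 != 0 by rewrite subr_eq0 gt_eqF //; lra.
case: (eqVneq p n%:R) => pn.
- pose phi := fun r : R => - c * ln r.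
  pose phi1 := fun r : R => - c * r^-1.
  pose phi2 := fun r : R => c * (r ^+ 2)^-1.
  have FE : (fun z => V z + K z) =
      (fun z => \sum_(l < N) a l * phi (enorm (z - y l)) + K z).
    by apply: funext => z; rewrite /V /fundsol pn eqxx.
  rewrite FE => g0.
  apply: (@main_general R n p N a y K n1 p2 apos C2K cK phi phi1 phi2) => //.
  + move=> r r0; exact: is_derive_cmulg (is_derive1_ln r0).
  + move=> r r0.
    have H := is_derive_cmulg (- c) (is_deriveV (f:=id) (negbT (gt_eqF r0)) (is_derive_id r 1)).
    apply: is_derive_val H.
    rewrite /phi2 /GRing.scale /= mulr1; ring.
  + move=> r r0; rewrite /phi1 mulNr oppr_le0; apply: mulr_ge0; [exact: ltW|].
    by rewrite invr_ge0 ltW.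
  + move=> r r0; rewrite /phi1 /phi2 pn.
    by field; rewrite gt_eqF.
- pose al := (p - n%:R) / (p - 1).
  pose phi := fun r : R => - c * ((p - 1) / (p - n%:R)) * r `^ al.
  pose phi1 := fun r : R => - c * r `^ (al - 1).
  pose phi2 := fun r : R => - c * (al - 1) * r `^ (al - 1 - 1).
  have FE : (fun z => V z + K z) =
      (fun z => \sum_(l < N) a l * phi (enorm (z - y l)) + K z).
    by apply: funext => z; rewrite /V /fundsol (negbTE pn).
  rewrite FE => g0.
  have pn' : p - n%:R != 0 by rewrite subr_eq0.
  apply: (@main_general R n p N a y K n1 p2 apos C2K cK phi phi1 phi2 _ _ _ _ x xy g0).
  + move=> r r0.
    have H := is_derive_cmulg (- c * ((p - 1) / (p - n%:R))) (is_derive1_powR al r0).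
    apply: is_derive_val H.
    by rewrite /phi1 /al; field; rewrite ?pn' ?p1.
  + move=> r r0.
    have H := is_derive_cmulg (- c) (is_derive1_powR (al - 1) r0).
    apply: is_derive_val H.
    by rewrite /phi2 /=; ring.
  + move=> r r0; rewrite /phi1 mulNr oppr_le0; apply: mulr_ge0; [exact: ltW|].
    exact: powR_ge0.
  + move=> r r0; rewrite /phi1 /phi2.
    have -> : r `^ (al - 1 - 1) = r `^ (al - 1) / r.
      rewrite powRB; last by apply/implyP => _; rewrite gt_eqF.
      by rewrite powRr1 // ltW.
    rewrite /al; field; rewrite ?pn' ?p1 ?gt_eqF //.
Qed.
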